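(* Let $\nu$ be a vector norm on $\mathbb{R}^n$, let $H=\{x\in\mathbb{R}^n: e^Tx=0\}$ where $e=(1,\ldots,1)^T$, and let $P_1,P_2,\ldots$ be a sequence of $n\times n$ column stochastic matrices. Suppose that $\sum_{i=1}^\infty(\max(\nu^0_H(P_i),1)-1)$ converges and that there is a subsequence $P_{i_1},P_{i_2},\ldots$ for which $\sum_{j=1}^\infty(1-\min(\nu^0_H(P_{i_j}),1))$ diverges. Then all general products formed from the sequence $P_1,P_2,\ldots$ are weakly ergodic.
   Context: A column stochastic matrix is a nonnegative matrix each of whose columns sums to $1$; $H$ is invariant under every such matrix. The coefficient of ergodicity associated with $\nu$ is $\nu^0_H(P)=\sup_{0\ne x\in H}\nu(Px)/\nu(x)$. General products: given a permutation $\sigma$ of the positive integers, set $B_i=P_{\sigma(i)}$; for an integer $p\ge0$ and each $r\ge1$, $C_{p,r}$ is a product of $B_{p+1},\ldots,B_{p+r}$, each used exactly once, in some order (chosen arbitrarily and independently for each $r$). All general products are weakly ergodic if for every such choice of $\sigma$, $p$ and orders, $\lim_{r\to\infty}C_{p,r}x=0$ for all $x\in H$. *)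

(* Defs.v *)
From HB Require Import structures.
From mathcomp Require Import all_boot all_order all_algebra all_fingroup.
From mathcomp Require Import all_classical all_reals all_analysis.
Set Implicit Arguments. Unset Strict Implicit. Unset Printing Implicit Defensive.
Import Order.TTheory GRing.Theory Num.Theory numFieldNormedType.Exports.
Local Open Scope classical_set_scope.
Local Open Scope ring_scope.

Section Defs.
Variables (R : realType) (n : nat).

Definition is_vnorm (nu : 'cV[R]_n -> R) : Prop :=
  [/\ forall x, 0 <= nu x,
      forall x, nu x = 0 -> x = 0,
      forall (a : R) x, nu (a *: x) = `|a| * nu x &
      forall x y, nu (x + y) <= nu x + nu y].

Definition inH (x : 'cV[R]_n) : Prop := (const_mx 1)^T *m x = 0 :> 'M[R]_1.

Definition col_stochastic (A : 'M[R]_n) : Prop :=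
  (forall i j, 0 <= A i j) /\ (forall j, \sum_i A i j = 1).

Definition ergcoef (nu : 'cV[R]_n -> R) (A : 'M[R]_n) : R :=
  sup [set nu (A *m x) / nu x | x in [set x | inH x /\ x != 0]].

(* C_{p,r}: product of B_{p}, ..., B_{p+r-1} (0-based) in the order given by
   the permutation tau of 'I_r : C = B_{p+tau 0} * B_{p+tau 1} * ... *)
Definition gen_product (B : nat -> 'M[R]_n) (p r : nat) (tau : 'S_r) : 'M[R]_n :=
  foldr (fun A C => A *m C) 1%:M [seq B (p + tau k)%N | k <- enum 'I_r].

Definition all_gen_products_weakly_ergodic (P : nat -> 'M[R]_n) : Prop :=
  forall sigma : nat -> nat, bijective sigma ->
  forall (p : nat) (tau : forall r : nat, 'S_r) (x : 'cV[R]_n), inH x ->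
  forall i : 'I_n,
    (fun r : nat => (gen_product (fun k => P (sigma k)) p (tau r) *m x) i 0)
      @ \oo --> (0 : R).

End Defs.

(* Main.v *)
From HB Require Import structures.
From mathcomp Require Import all_boot all_order all_algebra all_fingroup.
From mathcomp Require Import all_classical all_reals all_analysis.
Require Import Defs.
From mathcomp Require Import lra ring.
Import Order.TTheory GRing.Theory Num.Theory numFieldNormedType.Exports.
Local Open Scope classical_set_scope.
Local Open Scope ring_scope.

Section S.
Variables (R : realType) (n : nat) (nu : 'cV[R]_n -> R).
Hypothesis hnu : is_vnorm nu.

Lemma nu0 : nu 0 = 0.
Proof. case: hnu => _ _ hZ _. by rewrite -(scale0r (0:'cV[R]_n)) hZ normr0 mul0r. Qed.

Lemma nu_ge0 x : 0 <= nu x. Proof. by case: hnu. Qed.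

Lemma nuD x y : nu (x + y) <= nu x + nu y. Proof. by case: hnu. Qed.

Lemma nuN x : nu (- x) = nu x.
Proof. case: hnu => _ _ hZ _. by rewrite -scaleN1r hZ normrN normr1 mul1r. Qed.

Lemma nu_dist x y : `|nu x - nu y| <= nu (x - y).
Proof.
have h1 : nu x <= nu (x - y) + nu y by rewrite -{1}(subrK y x) nuD.
have h2 : nu y <= nu (x - y) + nu x.
  have -> : y = - (x - y) + x by rewrite opprB subrK.
  by rewrite (le_trans (nuD _ _)) // nuN opprB subrK.
rewrite ler_norml; apply/andP; split; lra.
Qed.

Lemma entry_le_norm m k (x : 'M[R]_(m, k)) i j : `|x i j| <= `|x|.
Proof.
have -> : `|x| = mx_norm x by [].
rewrite mx_normrE; apply/bigmax_geP; right => /=.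
by exists (i, j).
Qed.

Definition Mnu := \sum_j nu (delta_mx j (0 : 'I_1)).

Lemma nu_sum (I : Type) (s : seq I) (f : I -> 'cV[R]_n) :
  nu (\sum_(i <- s) f i) <= \sum_(i <- s) nu (f i).
Proof.
elim: s => [|a s IH]; first by rewrite !big_nil nu0.
rewrite !big_cons (le_trans (nuD _ _)) // lerD2l //.
Qed.

Lemma nu_coord_bound (y : 'cV[R]_n) (t : R) :
  (forall j, `|y j 0| <= t) -> nu y <= t * Mnu.
Proof.
case: hnu => _ _ hZ _ hy.
have -> : y = \sum_j y j 0 *: delta_mx j 0.
  apply/matrixP => a b; rewrite summxE (bigD1 a) //= big1 ?addr0.
    by rewrite !mxE !eqxx ord1 mulr1.
  by move=> j ja; rewrite !mxE eq_sym (negbTE ja) mulr0.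
rewrite (le_trans (nu_sum _ _ _)) // /Mnu mulr_sumr ler_sum // => j _.
by rewrite hZ ler_wpM2r // nu_ge0.
Qed.

Lemma nu_le_norm (y : 'cV[R]_n) : nu y <= `|y| * Mnu.
Proof. by apply: nu_coord_bound => j; apply: entry_le_norm. Qed.


Lemma nu_tr_le (u : 'rV[R]_n) : nu u^T <= `|u| * Mnu.
Proof. by apply: nu_coord_bound => j; rewrite mxE; apply: entry_le_norm. Qed.

Lemma Mnu_ge0 : 0 <= Mnu.
Proof. by apply: sumr_ge0 => j _; apply: nu_ge0. Qed.

Lemma g_cont : continuous (fun v : 'rV[R]_n => nu v^T).
Proof.
move=> v; apply/(@cvgrPdist_lt _ _ _ (nbhs v) (nbhs_filter v)) => e e0.
have d0 : 0 < e / (Mnu + 1) by rewrite divr_gt0 // ltr_wpDl // Mnu_ge0.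
near=> w.
have hw : `|v - w| < e / (Mnu + 1).
  by near: w; apply: cvgr_dist_lt => //; apply: cvg_id.
apply: (le_lt_trans (nu_dist _ _)).
rewrite -linearB /= (le_lt_trans (nu_tr_le _)) //.
have hM := Mnu_ge0.
have -> : e = e / (Mnu + 1) * Mnu + e / (Mnu + 1).
  by rewrite -[X in _ + X]mulr1 -mulrDr divfK // gt_eqF // ltr_wpDl.
rewrite ltr_pwDr // ler_wpM2r //; exact: ltW.
Unshelve. all: by end_near.
Qed.

Lemma nu_lower : (exists z : 'cV[R]_n, z != 0) ->
  exists2 m : R, 0 < m & forall (y : 'cV[R]_n) i, m * `|y i 0| <= nu y.
Proof.
case=> z z0.
pose g := fun v : 'rV[R]_n => nu v^T.
pose A := [set v : 'rV[R]_n | `|v| = 1].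
have unitv (u : 'rV[R]_n) : u != 0 -> A (`|u|^-1 *: u).
  move=> u0; rewrite /A /= normrZ normfV normr_id mulVf //.
  by rewrite normr_eq0.
have A0 : A !=set0.
  by exists (`|z^T|^-1 *: z^T); apply: unitv; rewrite trmx_eq0.
have cA : compact A.
  apply: bounded_closed_compact.
    rewrite /= /bounded_near.
    apply: (filterS _ (nbhs_pinfty_ge (r := 1) _)); last by rewrite num_real.
    by move=> M hM v Av /=; rewrite Av.
  apply: (@preimage_closed _ _ (Num.norm : 'rV[R]_n -> R) [set x : R | x = 1]); last exact: closed_eq.
  by move=> x _; apply: norm_continuous.
have gc : {within A, continuous g} by apply: continuous_subspaceT; exact: g_cont.
have [c cA' cmin] := @compact_EVT_min _ _ g A A0 cA gc.
have c0 : c != 0.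
  apply/eqP => c0; move: cA'; rewrite inE /A /= c0 normr0 => /eqP.
  by rewrite eq_sym oner_eq0.
exists (g c).
  rewrite lt_def nu_ge0 andbT; apply/eqP; case: hnu => _ hnu1 _ _ /hnu1.
  by move/eqP; rewrite trmx_eq0 (negbTE c0).
move=> y i.
have [->|y0] := eqVneq y 0; first by rewrite mxE normr0 mulr0 nu_ge0.
have yT0 : y^T != 0 by rewrite trmx_eq0.
have := cmin _ (mem_set (unitv _ yT0)).
rewrite /g linearZ /= trmxK.
case: hnu => _ _ hZ _; rewrite hZ normrV ?unitfE ?normr_eq0 // normr_id.
have nyT : 0 < `|y^T| by rewrite normr_gt0.
rewrite ler_pdivlMl // => h.
apply: le_trans h; rewrite mulrC ler_wpM2r //; first exact: nu_ge0.
by have := @entry_le_norm _ _ y^T 0 i; rewrite mxE.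
Qed.

Lemma inH_stoch (A : 'M[R]_n) (x : 'cV[R]_n) :
  col_stochastic A -> inH x -> inH (A *m x).
Proof.
move=> [_ hA] hx; rewrite /inH mulmxA.
have -> : (const_mx 1)^T *m A = (const_mx 1)^T :> 'M[R]_(1, n).
  apply/matrixP => i j; rewrite !mxE -[RHS](hA j); apply: eq_bigr => k _.
  by rewrite !mxE mul1r.
exact: hx.
Qed.

Lemma mx_entry_bound (A : 'M[R]_n) (x : 'cV[R]_n) (t : R) :
  0 <= t -> (forall k, `|x k 0| <= t) ->
  forall j, `|(A *m x) j 0| <= (\sum_j' \sum_k `|A j' k|) * t.
Proof.
move=> t0 hx j; rewrite mxE (le_trans (ler_norm_sum _ _ _)) //.
apply: (@le_trans _ _ ((\sum_k `|A j k|) * t)).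
  rewrite mulr_suml; apply: ler_sum => k _; rewrite normrM ler_wpM2l //.
rewrite ler_wpM2r // [leRHS](bigD1 j) //= lerDl.
by apply: sumr_ge0 => i _; apply: sumr_ge0.
Qed.

Lemma erg_prop (m : R) : 0 < m -> (forall (y : 'cV[R]_n) i, m * `|y i 0| <= nu y) ->
  (exists x : 'cV[R]_n, inH x /\ x != 0) ->
  forall A : 'M[R]_n, 0 <= ergcoef nu A /\
    forall x, inH x -> nu (A *m x) <= ergcoef nu A * nu x.
Proof.
move=> m0 hm [x0 [Hx0 x00]] A.
pose E := [set nu (A *m x) / nu x | x in [set x | inH x /\ x != 0]].
have nupos x : x != 0 -> 0 < nu x.
  move=> xn; rewrite lt_def nu_ge0 andbT; apply/eqP.
  by case: hnu => _ h _ _ /h /eqP; rewrite (negbTE xn).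
have hs : has_sup E.
  split; first by exists (nu (A *m x0) / nu x0); exists x0.
  exists ((\sum_j' \sum_k `|A j' k|) * Mnu / m) => _ [x [Hx xn] <-].
  have nx := nupos _ xn.
  rewrite ler_pdivrMr //.
  have -> : (\sum_j' \sum_k `|A j' k|) * Mnu / m * nu x =
    ((\sum_j' \sum_k `|A j' k|) * (nu x / m)) * Mnu by ring.
  apply: nu_coord_bound => j.
  apply: mx_entry_bound => [|k]; first by rewrite divr_ge0 // ?nu_ge0 // ltW.
  by rewrite ler_pdivlMr // mulrC hm.
have ub := sup_upper_bound hs.
split.
  apply: le_trans (ub _ _); last by exists x0.
  by rewrite divr_ge0 // nu_ge0.
move=> x Hx; have [->|xn] := eqVneq x 0; first by rewrite mulmx0 nu0 mulr0.
rewrite -ler_pdivrMr; last exact: nupos.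
by apply: ub; exists x.
Qed.

Lemma foldr_bound (L : seq 'M[R]_n) (c : 'M[R]_n -> R) :
  (forall A, A \in L -> 0 <= c A /\
     forall y, inH y -> inH (A *m y) /\ nu (A *m y) <= c A * nu y) ->
  forall x, inH x ->
    inH (foldr (fun A C => A *m C) 1%:M L *m x) /\
    nu (foldr (fun A C => A *m C) 1%:M L *m x) <= (\prod_(A <- L) c A) * nu x.
Proof.
elim: L => [|A L IH] hL x Hx /=.
  by rewrite mul1mx big_nil mul1r.
have [c0 hA] := hL A (mem_head _ _).
have [H1 N1] := IH (fun B hB => hL B (ltac:(by rewrite in_cons hB orbT))) x Hx.
have [H2 N2] := hA _ H1.
rewrite -mulmxA; split => //.
rewrite big_cons -mulrA (le_trans N2) // ler_wpM2l //.
Qed.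

End S.
Section Anal.
Variable R : realType.

Lemma sum_subseq_le (s r : seq nat) (f : nat -> R) :
  uniq s -> uniq r -> {subset s <= r} -> (forall i, 0 <= f i) ->
  \sum_(i <- s) f i <= \sum_(i <- r) f i.
Proof.
move=> us ur sr f0.
have pe : perm_eq r (s ++ [seq i <- r | i \notin s]).
  apply: uniq_perm => //.
    rewrite cat_uniq us filter_uniq // andbT /=.
    by apply/hasPn => x; rewrite mem_filter => /andP[].
  move=> x; rewrite mem_cat mem_filter.
  by case: (boolP (x \in s)) => //= xs; rewrite sr.
rewrite (perm_big _ pe) big_cat /= lerDl.
by apply: sumr_ge0 => i _.
Qed.

Lemma sum_inj_le (f : nat -> R) (t : nat -> nat) (J N : nat) :
  (forall i, 0 <= f i) ->
  (forall j1 j2, (j1 < J)%N -> (j2 < J)%N -> t j1 = t j2 -> j1 = j2) ->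
  (forall j, (j < J)%N -> (t j < N)%N) ->
  \sum_(j < J) f (t j) <= \sum_(i < N) f i.
Proof.
move=> f0 tinj tN.
rewrite -(big_mkord xpredT (fun j => f (t j))) -(big_mkord xpredT f).
rewrite /index_iota !subn0 -(big_map t xpredT f).
apply: sum_subseq_le => //; last first.
- by move=> i /mapP[j]; rewrite mem_iota => /andP[_ hj] ->; rewrite mem_iota /= tN.
- exact: iota_uniq.
rewrite map_inj_in_uniq ?iota_uniq // => a b; rewrite !mem_iota /= => ha hb.
exact: tinj.
Qed.

Lemma bound_exists (t : nat -> nat) (r : nat) :
  exists N, forall k, (k < r)%N -> (t k < N)%N.
Proof.
elim: r => [|r [N hN]]; first by exists 0%N.
exists (maxn N (t r).+1) => k; rewrite ltnS leq_eqVlt => /orP[/eqP ->|hk].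
  by rewrite leq_max leqnn orbT.
by rewrite leq_max hN.
Qed.

Lemma maxmin (c : R) : Num.max c 1 * Num.min c 1 = c.
Proof.
rewrite /Num.Def.maxr /Num.Def.minr; case: ltrP => h.
  by rewrite mul1r.
by rewrite mulr1.
Qed.

Lemma max1 (c : R) : 1 <= Num.max c 1.
Proof. rewrite /Num.Def.maxr; case: ltrP => h //. Qed.

Lemma min0 (c : R) : 0 <= c -> 0 <= Num.min c 1.
Proof. rewrite /Num.Def.minr; case: ltrP => h //. Qed.

Lemma min1 (c : R) : Num.min c 1 <= 1.
Proof. rewrite /Num.Def.minr; case: ltrP => h //; exact: ltW. Qed.

Lemma prod_to0 (c : nat -> R) (sigma : nat -> nat) (p : nat) :
  (forall i, 0 <= c i) -> bijective sigma ->
  cvg (series (fun i => Num.max (c i) 1 - 1) @ \oo) ->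
  (exists s : nat -> nat, {homo s : a b / (a < b)%N} /\
     ~ cvg (series (fun j => 1 - Num.min (c (s j)) 1) @ \oo)) ->
  forall K, 0 <= K -> forall e, 0 < e ->
  exists N, forall r, (N <= r)%N -> K * \prod_(k < r) c (sigma (p + k)%N) < e.
Proof.
move=> c0 [sinv sK sinvK] hcv [s [smono sdiv]] K K0 e e0.
pose a i := Num.max (c i) 1.
pose b i := Num.min (c i) 1.
pose S := limn (series (fun i => a i - 1)).
have a1 i : 1 <= a i by apply: max1.
have b0 i : 0 <= b i by apply: min0.
have b1 i : b i <= 1 by apply: min1.
have hA r : \prod_(k < r) a (sigma (p + k)%N) <= expR S.
  apply: (@le_trans _ _ (\prod_(k < r) expR (a (sigma (p + k)%N) - 1))).
    apply: ler_prod => k _; rewrite (le_trans ler01 (a1 _)) /=.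
    by rewrite (le_trans _ (expR_ge1Dx _)) // addrC subrK.
  rewrite -expR_sum ler_expR.
  have [N hN] := bound_exists (fun k => sigma (p + k)%N) r.
  apply: (@le_trans _ _ (\sum_(i < N) (a i - 1))).
    apply: (@sum_inj_le (fun i => a i - 1) (fun k => sigma (p + k)%N)).
    - by move=> i; rewrite subr_ge0.
    - move=> j1 j2 _ _ /(can_inj sK) /eqP; rewrite eqn_add2l => /eqP //.
    - exact: hN.
  have := @nondecreasing_cvgn_le _ (series (fun i => a i - 1)) _ hcv N.
  rewrite /series /= big_mkord; apply.
  apply: nondecreasing_series => i _ _; rewrite subr_ge0 //.
pose g i := 1 - b i.
have g0 i : 0 <= g i by rewrite /g subr_ge0.
have g1 i : g i <= 1 by rewrite /g lerBlDr lerDl.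
have unb : forall M : R, exists J, M < \sum_(j < J) g (s j).
  move=> M; apply/not_existsP => hJ; apply: sdiv.
  apply: nondecreasing_is_cvgn.
    rewrite /series /=; apply: nondecreasing_series => i _ _; exact: g0.
  exists M => _ [J _ <-]; rewrite /series /= big_mkord.
  by have := hJ J; rewrite ltNge => /negP /negbNE.
have hB : forall M : R, exists N, forall r, (N <= r)%N ->
    M <= \sum_(k < r) g (sigma (p + k)%N).
  move=> M; have [J hJ] := unb (M + p%:R).
  have [N hN] := bound_exists (fun j => sinv (s j)) J.
  exists N => r hr.
  have h1 : \sum_(j < J) g (s j) <= \sum_(q < p + r) g (sigma q).
    have -> : \sum_(j < J) g (s j) = \sum_(j < J) (fun q => g (sigma q)) (sinv (s j)).
      by apply: eq_bigr => j _ /=; rewrite sinvK.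
    apply: (@sum_inj_le (fun q => g (sigma q)) (fun j => sinv (s j))) => //.
      move=> j1 j2 _ _ /(can_inj sinvK) e12.
      case: (ltngtP j1 j2) => // l; move: (smono _ _ l); by rewrite e12 ltnn.
    move=> j hj; apply: (leq_trans (hN j hj)); apply: (leq_trans hr).
    exact: leq_addl.
  have h2 : \sum_(q < p + r) g (sigma q) <= p%:R + \sum_(k < r) g (sigma (p + k)%N).
    rewrite big_split_ord /= lerD2r.
    apply: (@le_trans _ _ (\sum_(q < p) (1 : R))); first by apply: ler_sum.
    by rewrite sumr_const card_ord.
  lra.
pose K' := K * expR S.
have K'0 : 0 <= K' by rewrite mulr_ge0 // expR_ge0.
have [N hN] := hB (K' / e).
exists N => r hr.
have hT := hN r hr.
set T := \sum_(k < r) g (sigma (p + k)%N) in hT.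
have hprod : \prod_(k < r) c (sigma (p + k)%N) <= expR S * expR (- T).
  have -> : \prod_(k < r) c (sigma (p + k)%N) =
      \prod_(k < r) a (sigma (p + k)%N) * \prod_(k < r) b (sigma (p + k)%N).
    by rewrite -big_split /=; apply: eq_bigr => k _; rewrite /a /b maxmin.
  apply: ler_pM => //; first by apply: prodr_ge0 => k _; rewrite (le_trans ler01).
    by apply: prodr_ge0.
  apply: (@le_trans _ _ (\prod_(k < r) expR (- g (sigma (p + k)%N)))).
    apply: ler_prod => k _; rewrite b0 /=.
    by rewrite (le_trans _ (expR_ge1Dx _)) // /g opprB addrC subrK.
  by rewrite -expR_sum sumrN.
have hE : 1 + T <= expR T by apply: expR_ge1Dx.
have Et : 0 < expR T by apply: expR_gt0.
have eT : K' <= e * T.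
  by rewrite -(ler_pdivrMl _ _ e0) mulrC.
apply: (@le_lt_trans _ _ (K' * (expR T)^-1)).
  by rewrite /K' -mulrA ler_wpM2l // -expRN.
rewrite ltr_pdivrMr //.
nra.
Qed.

End Anal.

Theorem theorem4p3 (R : realType) (n : nat) (nu : 'cV[R]_n -> R)
  (P : nat -> 'M[R]_n) :
  is_vnorm nu ->
  (forall i, col_stochastic (P i)) ->
  cvg (series (fun i => Num.max (ergcoef nu (P i)) 1 - 1) @ \oo) ->
  (exists s : nat -> nat, {homo s : a b / (a < b)%N} /\
     ~ cvg (series (fun j => 1 - Num.min (ergcoef nu (P (s j))) 1) @ \oo)) ->
  all_gen_products_weakly_ergodic P.
Proof.
move=> hnu hst hcv hdiv sigma hsig p tau x Hx i.
have [x0|xn] := eqVneq x 0.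
  have -> : (fun r => (gen_product (fun k => P (sigma k)) p (tau r) *m x) i 0)
      = fun=> 0.
    by apply: funext => r; rewrite x0 mulmx0 mxE.
  exact: cvg_cst.
have hne : exists y : 'cV[R]_n, inH y /\ y != 0 by exists x.
have [m m0 hm] := @nu_lower _ _ _ hnu (ex_intro _ x xn).
have E := @erg_prop _ _ _ hnu m m0 hm hne.
pose c j := ergcoef nu (P j).
have c0 j : 0 <= c j by case: (E (P j)).
have K0 : 0 <= nu x / m by rewrite divr_ge0 ?nu_ge0 // ltW.
apply/cvgrPdist_lt => e e0.
have [N hN] := @prod_to0 _ c sigma p c0 hsig hcv hdiv _ K0 e e0.
exists N => // r /= hr.
rewrite sub0r normrN.
set L := [seq (fun k => P (sigma k)) (p + tau r k)%N | k <- enum 'I_r].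
have hL : forall A, A \in L -> 0 <= ergcoef nu A /\
     forall y, inH y -> inH (A *m y) /\ nu (A *m y) <= ergcoef nu A * nu y.
  move=> A /mapP[k _ ->]; have [h1 h2] := E (P (sigma (p + tau r k)%N)).
  split => // y Hy; split; last exact: h2.
  exact: inH_stoch.
have [_ hb] := @foldr_bound _ _ nu L _ hL x Hx.
have hprod : \prod_(A <- L) ergcoef nu A = \prod_(k < r) c (sigma (p + k)%N).
  rewrite big_map big_enum /=.
  rewrite [RHS](reindex_inj (@perm_inj _ (tau r))) /=.
  by apply: eq_big.
rewrite hprod in hb.
apply: le_lt_trans (hN r hr).
rewrite -(ler_pM2l m0) (le_trans (hm _ _)) //.
rewrite /gen_product -/L (le_trans hb) //.
rewrite le_eqVlt; apply/orP; left; apply/eqP; field.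
by rewrite gt_eqF.
Qed.
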